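(* Let $n\in\{5,6,7,8,9,11\}$ and let $G_n$ be the regular network graph with cells $\{1,\dots,n\}$ (indices modulo $n$) in which each cell $i$ receives edges from its nearest and next nearest neighbours, i.e. the edges are $(i\pm1,i)$ and $(i\pm 2,i)$ for all $i$, all of a single edge type. Then $G_n$ has no exotic pattern of synchrony: for every balanced equivalence relation $\bowtie$ on the cells of $G_n$ there exists a subgroup $\Sigma$ of $\mathrm{Aut}(G_n)$ with $\bowtie\;=\;\bowtie_\Sigma$.
   Context: For a network graph with cells $\mathcal{C}$, edges $\mathcal{E}\subset\mathcal{C}\times\mathcal{C}$, and a single edge type (and single cell type), the input set of a cell $c$ is $I(c)=\{(d,c)\in\mathcal{E}\}$ and $\mathcal{T}(e)$ denotes the tail $d$ of an edge $e=(d,c)$. An equivalence relation $\bowtie$ on $\mathcal{C}$ is balanced if whenever $c\bowtie d$ there exists a bijection $\beta:I(c)\to I(d)$ with $\mathcal{T}(e)\bowtie\mathcal{T}(\beta(e))$ for all $e\in I(c)$. An automorphism of the graph is a permutation $\gamma$ of $\mathcal{C}$ with $(c,d)\in\mathcal{E}$ iff $(\gamma(c),\gamma(d))\in\mathcal{E}$; these form the group $\mathrm{Aut}$. For a subgroup $\Sigma$ of $\mathrm{Aut}$, $\bowtie_\Sigma$ is the orbit relation: $c\bowtie_\Sigma d$ iff $\gamma(c)=d$ for some $\gamma\in\Sigma$. A balanced equivalence relation is exotic if it is not of the form $\bowtie_\Sigma$ for any subgroup $\Sigma$ of $\mathrm{Aut}$. *)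

(* Defs.v *)
From mathcomp Require Import all_boot all_fingroup.
Set Implicit Arguments. Unset Strict Implicit. Unset Printing Implicit Defensive.

Section NetworkDefs.
Variable T : finType.
(* E d c  means there is an edge (d, c) from tail d to head c (single edge type). *)
Variable E : rel T.

Definition inputs (c : T) : {set T * T} := [set e | E e.1 e.2 && (e.2 == c)].

Definition tail (e : T * T) : T := e.1.

Definition is_equivalence (R : rel T) : Prop :=
  [/\ forall x, R x x, forall x y, R x y -> R y x &
      forall x y z, R x y -> R y z -> R x z].

Definition balanced (R : rel T) : Prop :=
  is_equivalence R /\
  forall c d, R c d ->
    exists beta : T * T -> T * T,
      [/\ {in inputs c &, injective beta},
          beta @: inputs c = inputs d &
          forall e, e \in inputs c -> R (tail e) (tail (beta e))].

Definition Aut_net : {set {perm T}} :=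
  [set g : {perm T} | [forall c, forall d, E c d == E (g c) (g d)]].

Definition orbit_rel (Sigma : {set {perm T}}) (c d : T) : Prop :=
  exists2 g, g \in Sigma & g c = d.

End NetworkDefs.

(* The ring network G_n with nearest and next-nearest neighbour coupling;
   cells are 0..n-1 (indices modulo n); edges (i+-1, i) and (i+-2, i). *)
Definition ring_nn (n : nat) : rel 'I_n :=
  fun d c => [|| (c + 1) %% n == d, (d + 1) %% n == c,
                 (c + 2) %% n == d | (d + 2) %% n == c].
Arguments ring_nn n : clear implicits.

(* Main.v *)
Require Import Defs.
From mathcomp Require Import all_boot all_fingroup.
Set Implicit Arguments. Unset Strict Implicit. Unset Printing Implicit Defensive.

Definition ringb (n d c : nat) : bool :=
  [|| (c + 1) %% n == d, (d + 1) %% n == c, (c + 2) %% n == d | (d + 2) %% n == c].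
Fixpoint allb {A} (f : A -> bool) (s : seq A) : bool :=
  match s with [::] => true | x :: s' => if f x then allb f s' else false end.
Fixpoint hasb {A} (f : A -> bool) (s : seq A) : bool :=
  match s with [::] => false | x :: s' => if f x then true else hasb f s' end.
Definition choices (s : seq nat) : seq nat :=
  size s :: [seq i <- iota 0 (size s) | nth 0 s i == i].
Fixpoint all_ext (k : nat) (s : seq nat) (P : seq nat -> bool) : bool :=
  match k with 0 => P s | k'.+1 => allb (fun v => all_ext k' (rcons s v) P) (choices s) end.
Definition nb0 n := [seq [seq x <- iota 0 n | ringb n x c] | c <- iota 0 n].
Definition sortlab (s : seq nat) (l : seq nat) := sort leq [seq nth 0 s x | x <- l].
Definition balancedb n nb s :=
  allb (fun c => sortlab s (nth [::] nb c) == sortlab s (nth [::] nb (nth 0 s c))) (iota 0 n).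
Definition goodb n (cands : seq (seq nat)) s :=
  allb (fun c => hasb (fun p => if nth 0 p (nth 0 s c) == c then
        allb (fun x => nth 0 s (nth 0 p x) == nth 0 s x) (iota 0 n) else false) cands) (iota 0 n).
Definition checkall n nb cands :=
  all_ext n [::] (fun s => if balancedb n nb s then goodb n cands s else true).
Definition dih n := [seq [seq (a * i + b) %% n | i <- iota 0 n] | a <- [:: 1; n.-1], b <- iota 0 n].
Definition autb n p := [&& size p == n, uniq p, all (fun x => x < n) p &
  all (fun c => all (fun d => ringb n c d == ringb n (nth 0 p c) (nth 0 p d)) (iota 0 n)) (iota 0 n)].
Definition cands n := [seq p <- (if n <= 6 then permutations (iota 0 n) else dih n) | autb n p].

Lemma allbE A (f : A -> bool) s : allb f s = all f s.
Proof. by elim: s => //= x s ->; case: (f x). Qed.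
Lemma hasbE A (f : A -> bool) s : hasb f s = has f s.
Proof. by elim: s => //= x s ->; case: (f x). Qed.

Lemma all_ext_sound k s t P : all_ext k s P -> size t = k ->
  (forall i, i < size t -> nth 0 t i \in choices (s ++ take i t)) -> P (s ++ t).
Proof.
elim: k s t => [|k IH] s t.
  by move=> /= H /eqP; rewrite size_eq0 => /eqP -> _; rewrite cats0.
move=> H; have {H} : allb (fun v => all_ext k (rcons s v) P) (choices s) := H.
case: t => // v t; rewrite allbE => /allP H [] St Hc.
have Hv : v \in choices s by have := Hc 0 isT; rewrite take0 cats0.
rewrite -cat_rcons; apply: IH (H _ Hv) St _ => i Hi.
by rewrite cat_rcons; apply: (Hc i.+1).
Qed.

Lemma card_count (T : finType) (P : pred T) : #|P| = count P (enum T).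
Proof. by rewrite cardE -size_filter enumT /enum_mem; congr size; apply: eq_filter. Qed.

Lemma mkperm n p : autb n p ->
  exists g : {perm 'I_n}, g \in Aut_net (ring_nn n) /\ forall i : 'I_n, val (g i) = nth 0 p i.
Proof.
case/and4P => /eqP Sp Up /allP Ap /allP Hp.
have Hlt (i : 'I_n) : nth 0 p i < n by apply: Ap; rewrite mem_nth // Sp.
pose f (i : 'I_n) : 'I_n := Ordinal (Hlt i).
have finj : injective f.
  move=> i j /(congr1 val) /= /eqP; rewrite nth_uniq ?Sp // => /eqP; exact: val_inj.
exists (perm finj); split; last by move=> i; rewrite permE.
rewrite inE; apply/forallP => c; apply/forallP => d; rewrite !permE.
have := Hp c; rewrite mem_iota /= ltn_ord => /(_ isT) /allP /(_ d).
by rewrite mem_iota /= ltn_ord => /(_ isT).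
Qed.

Section Main.
Variable n : nat.
Variable R : rel 'I_n.
Hypothesis HR : balanced (ring_nn n) R.

Let Req : is_equivalence R := HR.1.
Let Rrefl : forall x, R x x. Proof. by case: Req. Qed.
Let Rsym : forall x y, R x y -> R y x. Proof. by case: Req. Qed.
Let Rtrans : forall x y z, R x y -> R y z -> R x z. Proof. by case: Req. Qed.

Lemma count_le (c d : 'I_n) (Q : pred 'I_n) : R c d ->
  (forall x y, R x y -> Q x = Q y) ->
  #|[set x | ring_nn n x c && Q x]| <= #|[set x | ring_nn n x d && Q x]|.
Proof.
move=> Rcd HQ; have [beta [inj im tl]] := HR.2 c d Rcd.
pose A (c : 'I_n) := [set e in inputs (ring_nn n) c | Q (tail e)].
have HA (c' : 'I_n) : #|[set x | ring_nn n x c' && Q x]| = #|A c'|.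
  rewrite -(card_imset _ (fun x y (H : (x, c') = (y, c')) => congr1 fst H)).
  suff -> : [set (x, c') | x in [set x | ring_nn n x c' && Q x]] = A c' by [].
  apply/setP => -[x y]; rewrite !inE /=.
  apply/imsetP/idP => [[z] | ]; first by rewrite inE => /andP[Ez Qz] [-> ->]; rewrite Ez Qz eqxx.
  by case/andP => /andP[Exy /eqP Ey] Qx; subst y; exists x => //; rewrite inE Exy Qx.
rewrite !HA -(card_in_imset (f := beta) (D := A c)); last first.
  by move=> x y /setIdP[xi _] /setIdP[yi _]; apply: inj.
apply: subset_leq_card; apply/subsetP => e' /imsetP[e /setIdP[ei Qe] ->].
apply/setIdP; split; first by rewrite -im imset_f.
by rewrite -(HQ _ _ (tl e ei)).
Qed.

Lemma count_eq (c d : 'I_n) (Q : pred 'I_n) : R c d ->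
  (forall x y, R x y -> Q x = Q y) ->
  count (fun x => ring_nn n x c && Q x) (enum 'I_n) =
  count (fun x => ring_nn n x d && Q x) (enum 'I_n).
Proof.
move=> Rcd HQ; rewrite -!card_count.
have E1 (c' : 'I_n) : #|(fun x => ring_nn n x c' && Q x)| = #|[set x | ring_nn n x c' && Q x]|.
  by apply: eq_card => x; rewrite inE.
rewrite !E1; apply/eqP; rewrite eqn_leq (count_le Rcd HQ) (count_le (Rsym Rcd) HQ).
done.
Qed.

Definition lab (x : 'I_n) : nat := find (R x) (enum 'I_n).

Lemma has_lab x : has (R x) (enum 'I_n).
Proof. by apply/hasP; exists x; [rewrite mem_enum | apply: Rrefl]. Qed.

Lemma lab_lt x : lab x < n.
Proof. by rewrite -[n in _ < n]size_enum_ord -has_find has_lab. Qed.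

Definition z_of x := nth x (enum 'I_n) (lab x).

Lemma z_ofE x : val (z_of x) = lab x.
Proof. exact: nth_enum_ord (lab_lt x). Qed.

Lemma R_z_of x : R x (z_of x).
Proof. exact: (nth_find x (has_lab x)). Qed.

Lemma labE x y : R x y = (lab x == lab y).
Proof.
apply/idP/eqP => [Rxy | E].
  rewrite /lab; apply: eq_find => z; apply/idP/idP => H.
    exact: Rtrans (Rsym Rxy) H.
  exact: Rtrans Rxy H.
have H1 := R_z_of x; have H2 := R_z_of y.
have Ez : z_of x = z_of y by apply: val_inj; rewrite !z_ofE.
by apply: Rtrans H1 _; rewrite Ez; apply: Rsym.
Qed.

Definition L := map lab (enum 'I_n).

Lemma size_L : size L = n.
Proof. by rewrite size_map size_enum_ord. Qed.

Lemma nthL (x : 'I_n) : nth 0 L x = lab x.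
Proof. by rewrite (nth_map x) ?size_enum_ord // nth_ord_enum. Qed.

Lemma L_choices i : i < size L -> nth 0 L i \in choices ([::] ++ take i L).
Proof.
rewrite size_L => Hi; pose x := Ordinal Hi.
have -> : i = val x by [].
rewrite nthL /choices /= size_take size_L Hi.
have Hle : lab x <= x.
  rewrite leqNgt; apply/negP => H; have := before_find x H.
  by rewrite nth_ord_enum Rrefl.
rewrite inE; case: ltngtP Hle => // Hlt _ /=.
rewrite mem_filter mem_iota /= Hlt andbT.
rewrite nth_take // -z_ofE nthL z_ofE.
by apply/eqP/esym/eqP; rewrite -labE R_z_of.
Qed.

Lemma L_balanced : balancedb n (nb0 n) L.
Proof.
rewrite /balancedb allbE; apply/allP => c; rewrite mem_iota add0n => /andP[_ Hc].
pose x := Ordinal Hc; have -> : c = val x by [].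
have Hnb (y : 'I_n) : nth [::] (nb0 n) y = [seq u <- iota 0 n | ringb n u y].
  by rewrite (nth_map 0) ?size_iota // nth_iota.
rewrite nthL -z_ofE !Hnb; apply/eqP/perm_sortP; [exact: leq_total|exact: leq_trans|exact: anti_leq|].
apply/seq.permP => a; rewrite !count_map !count_filter -!val_enum_ord !count_map.
have HQ : forall u v : 'I_n, R u v -> a (lab u) = a (lab v).
  by move=> u v; rewrite labE => /eqP ->.
have := count_eq (Q := fun u => a (lab u)) (R_z_of x) HQ.
move=> H; transitivity (count (fun u : 'I_n => ring_nn n u x && a (lab u)) (enum 'I_n)).
  rewrite -enumT; by apply: eq_count => u /=; rewrite andbC nthL.
rewrite H -enumT; apply: eq_count => u /=; rewrite andbC nthL.
done.
Qed.

Definition SigS : {set {perm 'I_n}} :=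
  [set g : {perm 'I_n} | (g \in Aut_net (ring_nn n)) && [forall x, R x (g x)]].

Lemma SigS_group : group_set SigS.
Proof.
apply/group_setP; split.
  rewrite /SigS /Aut_net !inE; apply/andP; split.
    by apply/forallP => c; apply/forallP => d; rewrite !perm1.
  by apply/forallP => x; rewrite perm1 Rrefl.
move=> g h; rewrite /SigS /Aut_net !inE => /andP[/forallP ga /forallP gR] /andP[/forallP ha /forallP hR].
apply/andP; split; last by apply/forallP => x; rewrite permM; exact: Rtrans (gR x) (hR _).
apply/forallP => c; apply/forallP => d; rewrite !permM.
by rewrite (eqP (forallP (ga c) d)) (eqP (forallP (ha (g c)) (g d))).
Qed.

Lemma good_orbit (Hg : goodb n (cands n) L) (c : 'I_n) :
  exists2 g, g \in SigS & g (z_of c) = c.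
Proof.
move: Hg; rewrite /goodb allbE => /allP /(_ c); rewrite mem_iota /= ltn_ord => /(_ isT).
rewrite hasbE => /hasP[p pin]; case: eqP => // Hp; rewrite allbE => /allP Hx.
have [|g [ga gv]] := @mkperm n p; first by move: pin; rewrite mem_filter => /andP[].
exists g.
  rewrite /SigS inE ga /=; apply/forallP => x; rewrite labE -!nthL gv eq_sym.
  by apply: Hx; rewrite mem_iota /= ltn_ord.
by apply: val_inj; rewrite gv z_ofE -nthL.
Qed.

Lemma main_sec (Hg : goodb n (cands n) L) :
  exists Sigma : {group {perm 'I_n}},
    Sigma \subset Aut_net (ring_nn n) /\
    forall c d : 'I_n, R c d <-> orbit_rel Sigma c d.
Proof.
exists (Group SigS_group); split.
  by apply/subsetP => g /=; rewrite /SigS inE => /andP[].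
move=> c d; split.
  move=> Rcd; have [g1 g1S g1z] := good_orbit Hg c; have [g2 g2S g2z] := good_orbit Hg d.
  have Ez : z_of c = z_of d by apply: val_inj; rewrite !z_ofE; apply/eqP; rewrite -labE.
  exists (g1^-1 * g2)%g; first by apply: (@groupM _ (Group SigS_group)); rewrite ?groupV.
  by rewrite permM -g1z permK Ez g2z.
by case=> g /=; rewrite /SigS inE => /andP[_ /forallP H] <-.
Qed.

End Main.


Lemma main n (Hc : checkall n (nb0 n) (cands n)) (R : rel 'I_n) (HR : balanced (ring_nn n) R) :
  exists Sigma : {group {perm 'I_n}},
    Sigma \subset Aut_net (ring_nn n) /\
    forall c d : 'I_n, R c d <-> orbit_rel Sigma c d.
Proof.
apply: (main_sec HR).
have := all_ext_sound Hc (size_L R) (L_choices HR).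
by rewrite /= (L_balanced HR).
Qed.

Lemma chk5 : checkall 5 (nb0 5) (cands 5). Proof. by vm_compute. Qed.
Lemma chk6 : checkall 6 (nb0 6) (cands 6). Proof. by vm_compute. Qed.
Lemma chk7 : checkall 7 (nb0 7) (cands 7). Proof. by vm_compute. Qed.
Lemma chk8 : checkall 8 (nb0 8) (cands 8). Proof. by vm_compute. Qed.
Lemma chk9 : checkall 9 (nb0 9) (cands 9). Proof. by vm_compute. Qed.
Lemma chk11 : checkall 11 (nb0 11) (cands 11). Proof. by vm_compute. Qed.

Theorem proposition3p3 (n : nat) (hn : n \in [:: 5; 6; 7; 8; 9; 11]) :
  forall R : rel 'I_n, balanced (ring_nn n) R ->
    exists Sigma : {group {perm 'I_n}},
      Sigma \subset Aut_net (ring_nn n) /\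
      forall c d : 'I_n, R c d <-> orbit_rel Sigma c d.
Proof.
have H : checkall n (nb0 n) (cands n).
  move: hn; rewrite !inE.
  case/orP => [/eqP->|]; first exact: chk5.
  case/orP => [/eqP->|]; first exact: chk6.
  case/orP => [/eqP->|]; first exact: chk7.
  case/orP => [/eqP->|]; first exact: chk8.
  case/orP => [/eqP->|]; first exact: chk9.
  by move=> /eqP->; exact: chk11.
by move=> R HR; exact: main H R HR.
Qed.
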